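(* Let $M$ be a matroid with at least two bases and of rank at most $2$. Then $M$ has the Borsuk property.
   Context: All matroids are finite. For a matroid $M$, $\mathcal{B}(M)$ denotes its set of bases, and the distance between two bases $B,B'$ is $|B\triangle B'|$ (symmetric difference); $\operatorname{diam}$ denotes the diameter with respect to this distance. The Borsuk number $f(M)$ is the minimum number of parts in a partition of $\mathcal{B}(M)$ in which every part has diameter strictly smaller than $\operatorname{diam}(\mathcal{B}(M))$; if $M$ has exactly one basis, $f(M):=+\infty$. If $M$ has $n$ elements and $c$ connected components, $M$ has the Borsuk property if $f(M)\le n-c+1$. *)

(* Defs.v *)
From mathcomp Require Import all_boot.
Set Implicit Arguments. Unset Strict Implicit. Unset Printing Implicit Defensive.

Section Matroid.
Variable E : finType.

Definition basis_exchange (bs : {set {set E}}) : Prop :=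
  forall B1 B2, B1 \in bs -> B2 \in bs -> forall x, x \in B1 :\: B2 ->
    exists2 y, y \in B2 :\: B1 & (y |: (B1 :\ x)) \in bs.

Record matroid := Matroid {
  bases : {set {set E}};
  bases_nonempty : bases != set0;
  bases_exchange : basis_exchange bases }.

Variable M : matroid.

(* rank = size of a basis (all bases have the same size) *)
Definition rank : nat := \max_(B in bases M) #|B|.

Definition indep (I : {set E}) : bool := [exists B in bases M, I \subset B].
Definition circuit (C : {set E}) : bool :=
  ~~ indep C && [forall D : {set E}, (D \proper C) ==> indep D].

Definition conn (e f : E) : bool :=
  (e == f) || [exists C : {set E}, circuit C && (e \in C) && (f \in C)].
Definition components : {set {set E}} := [set [set f | conn e f] | e : E].
Definition n_components : nat := #|components|.

Definition dist (B1 B2 : {set E}) : nat := #|(B1 :\: B2) :|: (B2 :\: B1)|.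
Definition diam (F : {set {set E}}) : nat :=
  \max_(B1 in F) \max_(B2 in F) dist B1 B2.

Definition borsuk_partition (P : {set {set {set E}}}) : bool :=
  partition P (bases M) && [forall X in P, diam X < diam (bases M)].

(* Borsuk number: None encodes +infinity (exactly one basis); otherwise the
   least k such that a Borsuk partition with k parts exists (such a partition
   always exists with at most #|bases M| parts, namely the singletons). *)
Definition borsuk_number : option nat :=
  if #|bases M| <= 1 then None
  else Some (find (fun k => [exists P, borsuk_partition P && (#|P| == k)])
                  (iota 0 (#|bases M|).+1)).

Definition borsuk_property : Prop :=
  match borsuk_number with
  | Some k => k <= #|E| - n_components + 1
  | None => False
  end.

End Matroid.

(* Main.v *)
Require Import Defs.
From mathcomp Require Import all_boot zify.
Set Implicit Arguments. Unset Strict Implicit. Unset Printing Implicit Defensive.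


Section S.
Variable E : finType.
Implicit Types (M : matroid E).

Lemma card_bases_le M (B1 B2 : {set E}) : B1 \in bases M -> B2 \in bases M -> #|B2| <= #|B1|.
Proof.
move=> h1; move Hn: #|B2 :\: B1| => n; elim: n B2 Hn => [|n IH] B2 Hn h2.
  have : B2 \subset B1 by rewrite -setD_eq0 -cards_eq0 Hn.
  exact: subset_leq_card.
have : B2 :\: B1 != set0 by rewrite -card_gt0 Hn.
case/set0Pn=> x hx.
have [y hy hb] := bases_exchange h2 h1 hx.
move: hx hy; rewrite !inE => /andP[xB1 xB2] /andP[yB2 yB1].
have -> : #|B2| = #|y |: (B2 :\ x)|.
  rewrite cardsU1 !inE (negbTE yB2) andbF /= (cardsD1 x B2) xB2 add1n.
  done.
apply: (IH _ _ hb).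
have -> : (y |: B2 :\ x) :\: B1 = (B2 :\: B1) :\ x.
  apply/setP=> z; rewrite !inE; case: (eqVneq z y) => [->|]; first by rewrite yB1 /=; case: (y == x).
  by move=> _; rewrite /=; case: (z != x); case: (z \in B1).
by move: Hn; rewrite (cardsD1 x (B2 :\: B1)) !inE xB1 xB2 add1n => -[].
Qed.

Lemma card_bases M (B1 B2 : {set E}) : B1 \in bases M -> B2 \in bases M -> #|B1| = #|B2|.
Proof. by move=> h1 h2; apply/eqP; rewrite eqn_leq !(card_bases_le h1 h2, card_bases_le h2 h1). Qed.

End S.
Module Bm.

Section S.
Variable E : finType.
Variable M : matroid E.

Definition nonloop x := [exists B in bases M, x \in B].
Definition adj (a b : E) := [set a; b] \in bases M.
Definition sim a b := (a == b) || ~~ adj a b.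
Definition Nset := [set x | nonloop x].
Definition cls x := [set f | conn M x f].

Lemma nonloopP x : reflect (exists2 B, B \in bases M & x \in B) (nonloop x).
Proof. by apply: (iffP existsP) => [[B /andP[]]|[B h1 h2]]; [exists B|exists B; rewrite h1]. Qed.

Lemma indepP (I : {set E}) : reflect (exists2 B, B \in bases M & I \subset B) (indep M I).
Proof. by apply: (iffP existsP) => [[B /andP[]]|[B h1 h2]]; [exists B|exists B; rewrite h1]. Qed.

Lemma indep_sub (I J : {set E}) : I \subset J -> indep M J -> indep M I.
Proof. by move=> IJ /indepP[B hB JB]; apply/indepP; exists B => //; apply: subset_trans JB. Qed.

Lemma indep_basis (B : {set E}) : B \in bases M -> indep M B.
Proof. by move=> hB; apply/indepP; exists B. Qed.

Lemma indep1 x : nonloop x -> indep M [set x].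
Proof. by case/nonloopP=> B hB xB; apply/indepP; exists B; rewrite ?sub1set. Qed.

Lemma circuitI (C : {set E}) : ~~ indep M C -> (forall x, x \in C -> indep M (C :\ x)) -> circuit M C.
Proof.
move=> nC h; rewrite /circuit nC /=; apply/forallP => D; apply/implyP.
case/properP => sub [x xC xD]; apply: indep_sub (h x xC).
apply/subsetP => y yD; rewrite !inE (subsetP sub y yD) andbT.
by apply: contraNneq xD => <-.
Qed.

Lemma loop_circ (C : {set E}) l x : circuit M C -> l \in C -> ~~ nonloop l -> x \in C -> x = l.
Proof.
case/andP=> _ /forallP h lC nl xC; apply/eqP; apply: contraNT nl => xl.
have : [set l] \proper C.
  by apply/properP; split; [rewrite sub1set | exists x; rewrite ?inE].
move/(implyP (h _)) => /indepP[B hB]; rewrite sub1set => lB.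
by apply/nonloopP; exists B.
Qed.

Lemma conn_loop x l : x != l -> ~~ nonloop l -> conn M x l = false.
Proof.
move=> xl nl; rewrite /conn (negbTE xl) /=; apply/negbTE/negP => /existsP[C /andP[/andP[cC xC] lC]].
by move: xl; rewrite (loop_circ cC lC nl xC) eqxx.
Qed.

Lemma circuit2 a b : a != b -> nonloop a -> nonloop b -> ~~ indep M [set a; b] -> circuit M [set a; b].
Proof.
move=> ab na nb ni; apply: circuitI => // x; rewrite !inE => /orP[]/eqP->.
  apply: indep_sub (indep1 nb); apply/subsetP => z; rewrite !inE.
  by case/andP=> /negbTE -> /=.
apply: indep_sub (indep1 na); apply/subsetP => z; rewrite !inE.
by case/andP=> /negbTE ->; rewrite orbF.
Qed.

Lemma conn_circ (C : {set E}) x y : circuit M C -> x \in C -> y \in C -> conn M x y.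
Proof. by move=> c xC yC; apply/orP; right; apply/existsP; exists C; rewrite c xC yC. Qed.

Lemma dist_le_diam (B1 B2 : {set E}) : B1 \in bases M -> B2 \in bases M -> dist B1 B2 <= diam (bases M).
Proof.
move=> h1 h2; rewrite /diam.
apply: (bigmax_sup B1) => //; apply: (bigmax_sup B2) => //.
Qed.

Lemma diam_lt (X : {set {set E}}) d : 0 < d ->
  (forall B1 B2, B1 \in X -> B2 \in X -> dist B1 B2 < d) -> diam X < d.
Proof.
move=> d0 h; rewrite /diam -(prednK d0) ltnS.
apply/bigmax_leqP => B1 h1; apply/bigmax_leqP => B2 h2.
by rewrite -ltnS prednK // h.
Qed.

Lemma dist_self (B : {set E}) : dist B B = 0.
Proof. by rewrite /dist setDv setU0 cards0. Qed.

Lemma diam_pos : 1 < #|bases M| -> 0 < diam (bases M).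
Proof.
case/card_gt1P => B1 [B2 [h1 h2 ne]].
apply: leq_trans (dist_le_diam h1 h2); rewrite /dist card_gt0.
apply: contraNneq ne => /eqP; rewrite setU_eq0 !setD_eq0 => /andP[s1 s2].
by rewrite eqEsubset s1 s2.
Qed.

Lemma dist_share (B1 B2 : {set E}) q : #|B1| = 2 -> #|B2| = 2 -> q \in B1 -> q \in B2 -> dist B1 B2 <= 2.
Proof.
move=> c1 c2 q1 q2; rewrite /dist.
apply: leq_trans (leq_card_setU _ _) _.
have a1 : #|B1 :\: B2| <= 1.
  have : B1 :\: B2 \subset B1 :\ q.
    by apply/subsetP => z; rewrite !inE => /andP[zB2 ->]; rewrite andbT; apply: contraNneq zB2 => ->.
  move/subset_leq_card; move: (cardsD1 q B1); rewrite q1 c1; lia.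
have a2 : #|B2 :\: B1| <= 1.
  have : B2 :\: B1 \subset B2 :\ q.
    by apply/subsetP => z; rewrite !inE => /andP[zB2 ->]; rewrite andbT; apply: contraNneq zB2 => ->.
  move/subset_leq_card; move: (cardsD1 q B2); rewrite q2 c2; lia.
lia.
Qed.

Lemma dist_disj (B1 B2 : {set E}) : [disjoint B1 & B2] -> dist B1 B2 = #|B1| + #|B2|.
Proof.
move=> d; rewrite /dist (setDidPl d) (setDidPl _); last by rewrite disjoint_sym.
by have /leqifP := leq_card_setU B1 B2; rewrite d => /eqP.
Qed.

Lemma part_ex (T : finType) (F : {set E} -> T) (S : {set T}) :
  (forall B, B \in bases M -> F B \in S) ->
  (forall B1 B2, B1 \in bases M -> B2 \in bases M -> F B1 = F B2 -> dist B1 B2 < diam (bases M)) ->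
  0 < diam (bases M) ->
  exists P, [/\ borsuk_partition M P, #|P| <= #|S| & #|P| <= #|bases M|].
Proof.
move=> hS hd d0; exists (preim_partition F (bases M)); split.
- rewrite /borsuk_partition preim_partitionP /=; apply/forallP => X; apply/implyP.
  case/imsetP => B hB ->; apply: diam_lt => // B1 B2; rewrite !inE.
  by case/andP=> h1 /eqP e1 /andP[h2 /eqP e2]; apply: hd; rewrite // -e1 -e2.
- have -> : preim_partition F (bases M) =
     (fun t => [set y in bases M | t == F y]) @: (F @: bases M).
    by rewrite -imset_comp.
  apply: leq_trans (leq_imset_card _ _) _; apply: subset_leq_card.
  by apply/subsetP => t /imsetP[B hB ->]; apply: hS.
- exact: leq_imset_card.
Qed.

Lemma star_part (Q : {set E}) :
  (forall B, B \in bases M -> B :&: Q != set0) ->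
  (forall B1 B2 q, B1 \in bases M -> B2 \in bases M -> q \in Q -> q \in B1 -> q \in B2 ->
     dist B1 B2 < diam (bases M)) ->
  0 < diam (bases M) ->
  exists P, [/\ borsuk_partition M P, #|P| <= #|Q| & #|P| <= #|bases M|].
Proof.
move=> hne hd d0.
have hS : forall B, B \in bases M -> [pick z in B :&: Q] \in Some @: Q.
  move=> B hB; case: pickP => [z|n]; first by rewrite inE => /andP[_ zQ]; apply: imset_f.
  by case/set0Pn: (hne B hB) => z; rewrite n.
have hD : forall B1 B2, B1 \in bases M -> B2 \in bases M ->
    [pick z in B1 :&: Q] = [pick z in B2 :&: Q] -> dist B1 B2 < diam (bases M).
  move=> B1 B2 b1 b2; case: pickP => [z|n]; last by case/set0Pn: (hne B1 b1) => z; rewrite n.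
  rewrite inE => /andP[z1 zQ]; case: pickP => [w|n]; last by case/set0Pn: (hne B2 b2) => w; rewrite n.
  by rewrite inE => /andP[w2 wQ] [ew]; apply: (hd _ _ z); rewrite // ew.
have [P [h1 h2 h3]] := part_ex hS hD d0.
by exists P; split => //; apply: leq_trans h2 (leq_imset_card _ _).
Qed.

Lemma number_le P : 1 < #|bases M| -> borsuk_partition M P -> #|P| <= #|bases M| ->
  exists k, borsuk_number M = Some k /\ k <= #|P|.
Proof.
move=> h1 bP cP; rewrite /borsuk_number leqNgt h1.
exists (find (fun k => [exists P, borsuk_partition M P && (#|P| == k)])
                  (iota 0 (#|bases M|).+1)); split; first by [].
rewrite leqNgt; apply/negP => lt.
have := before_find 0 lt; rewrite nth_iota ?ltnS // add0n.
by move/negbT/existsPn => /(_ P); rewrite bP eqxx.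
Qed.

Lemma comp_bound (Q : {set {set E}}) : (forall x, nonloop x -> cls x \in Q) ->
  n_components M + #|Nset| <= #|E| + #|Q| /\ n_components M <= #|E|.
Proof.
move=> hQ; split; last first.
  rewrite /n_components /components; apply: leq_trans (leq_imset_card _ _) _. exact: leqnn.
have sub : components M \subset Q :|: (cls @: ~: Nset).
  apply/subsetP => X /imsetP[e _ ->]; rewrite inE; case ne: (nonloop e).
    by rewrite (hQ e ne).
  by apply/orP; right; apply: imset_f; rewrite !inE ne.
have h2 := subset_leq_card sub; have h1 := (leq_card_setU Q (cls @: ~: Nset)).1.
have h3 := leq_imset_card cls (~: Nset); rewrite /n_components -(cardsC Nset) addnC.
apply: leq_trans (leq_add (leqnn _) (leq_trans h2 h1)) _.
by rewrite -addnA leq_add2l addnC leq_add2r.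
Qed.

Lemma finish (Q : {set {set E}}) (P : {set {set {set E}}}) :
  1 < #|bases M| -> borsuk_partition M P -> #|P| <= #|bases M| ->
  #|P| + #|Q| <= #|Nset| + 1 -> (forall x, nonloop x -> cls x \in Q) -> borsuk_property M.
Proof.
move=> h1 bP cP hPQ hQ; rewrite /borsuk_property; have [k [-> hk]] := number_le h1 bP cP.
have [c1 c2] := comp_bound hQ; lia.
Qed.

End S.
End Bm.
Import Bm.

Section R1.
Variable E : finType.
Variable M : matroid E.
Hypothesis H1 : forall B, B \in bases M -> #|B| = 1.

Lemma r1_cls x : nonloop M x -> cls M x = Nset M.
Proof.
move=> nx; apply/setP => y; rewrite !inE.
case: (eqVneq x y) => [<-|xy]; first by rewrite nx /conn eqxx.
case ny: (nonloop M y); last by rewrite conn_loop // ny.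
apply: (@conn_circ _ M [set x; y]); rewrite ?inE ?eqxx ?orbT //.
apply: circuit2 => //; apply/negP => /indepP[B hB sB].
by have := subset_leq_card sB; rewrite (H1 hB) cards2 xy.
Qed.

Lemma r1_main : 1 < #|bases M| -> borsuk_property M.
Proof.
move=> h1.
have hne : forall B, B \in bases M -> B :&: Nset M != set0.
  move=> B hB; move/eqP: (H1 hB) => /cards1P[x Bx].
  by apply/set0Pn; exists x; rewrite !inE Bx set11 /=; apply/nonloopP; exists B; rewrite // Bx set11.
have hd : forall B1 B2 q, B1 \in bases M -> B2 \in bases M -> q \in Nset M -> q \in B1 -> q \in B2 ->
     dist B1 B2 < diam (bases M).
  move=> B1 B2 q b1 b2 _ q1 q2.
  have /eqP/cards1P[a1 Bx] := H1 b1; have /eqP/cards1P[a2 By] := H1 b2.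
  move: q1 q2; rewrite Bx By !inE => /eqP E1 /eqP E2; rewrite E1 in E2; rewrite E2.
  by rewrite dist_self; apply: diam_pos.
have [P [bP cP cPb]] := star_part hne hd (diam_pos h1).
apply: (@finish _ M [set Nset M] P) => //.
  by rewrite cards1; lia.
by move=> x nx; rewrite r1_cls // set11.
Qed.

End R1.

Section R2.
Variable E : finType.
Variable M : matroid E.
Hypothesis H2 : forall B, B \in bases M -> #|B| = 2.

Local Notation adj := (adj M).
Local Notation sim := (sim M).
Local Notation nonloop := (nonloop M).

Lemma adj_neq a b : adj a b -> a != b.
Proof. by move/H2; rewrite cards2; case: eqP. Qed.

Lemma adjC a b : adj a b = adj b a.
Proof. by rewrite /Bm.adj setUC. Qed.

Lemma adj_nl a b : adj a b -> nonloop a.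
Proof. by move=> h; apply/nonloopP; exists [set a; b]; rewrite // !inE eqxx. Qed.

Lemma adj_nr a b : adj a b -> nonloop b.
Proof. by rewrite adjC; apply: adj_nl. Qed.

Lemma simC a b : sim a b = sim b a.
Proof. by rewrite /Bm.sim eq_sym adjC. Qed.

Lemma simxx a : sim a a.
Proof. by rewrite /Bm.sim eqxx. Qed.

Lemma basis2 B x : B \in bases M -> x \in B -> exists2 y, y != x & B = [set x; y].
Proof.
move=> hB xB; have /eqP/cards2P[u [v [uv eB]]] := H2 hB.
move: xB; rewrite eB !inE => /orP[]/eqP->.
  by exists v; rewrite // eq_sym.
by exists u => //; rewrite setUC.
Qed.

Lemma indep2 a b : indep M [set a; b] -> a != b -> adj a b.
Proof.
case/indepP => B hB sB ab.
have : [set a; b] == B by rewrite eqEcard sB (H2 hB) cards2 ab.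
by rewrite /Bm.adj => /eqP ->.
Qed.

Lemma lemX s u t : adj s u -> nonloop t -> t != s -> t != u -> adj t s || adj t u.
Proof.
move=> hsu /nonloopP[B2 hB2 tB2] ts tu.
have [w wt eB2] := basis2 hB2 tB2.
case: (eqVneq w s) => [ws|ws]; first by rewrite /Bm.adj -ws -eB2 hB2.
case: (eqVneq w u) => [wu|wu]; first by rewrite /Bm.adj -wu -eB2 hB2 orbT.
have wD : w \in B2 :\: [set s; u] by rewrite eB2 !inE eqxx orbT (negbTE ws) (negbTE wu).
have [y yD hb] := bases_exchange hB2 hsu wD.
have e : y |: (B2 :\ w) = [set y; t].
  apply/setP => z; rewrite eB2 !inE; case: (eqVneq z y) => //= _.
  by case: (eqVneq z w) => [->|]; rewrite ?(negbTE wt) //= orbF.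
move: yD; rewrite !inE => /andP[_ /orP[]/eqP ey]; move: hb; rewrite e ey => hb.
  by rewrite adjC /Bm.adj hb.
by rewrite adjC [adj t u]adjC /Bm.adj hb orbT.
Qed.

Lemma sim_trans a b c : nonloop b -> sim a b -> sim b c -> sim a c.
Proof.
move=> nb hab hbc; rewrite /Bm.sim; case: (eqVneq a c) => //= ac.
apply/negP => hac.
case: (eqVneq b a) => [ba|ba].
  by subst b; move: hbc; rewrite /Bm.sim (negbTE ac) hac.
case: (eqVneq b c) => [bc|bc].
  by subst b; move: hab; rewrite /Bm.sim (negbTE ac) hac.
have := lemX hac nb ba bc; move: hab hbc; rewrite /Bm.sim eq_sym (negbTE ba) (negbTE bc) /=.
by rewrite adjC => /negbTE -> /negbTE ->.
Qed.

Lemma not_sim a b : ~~ sim a b -> (a != b) && adj a b.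
Proof. by rewrite /Bm.sim negb_or negbK. Qed.

Lemma adj_not_sim a b : adj a b -> ~~ sim a b.
Proof. by move=> h; rewrite /Bm.sim negb_or (adj_neq h) h. Qed.

Lemma sim_neq_nadj a b : sim a b -> a != b -> ~~ adj a b.
Proof. by rewrite /Bm.sim => /orP[/eqP->|//]; rewrite eqxx. Qed.

Lemma circ2 a b : a != b -> nonloop a -> nonloop b -> ~~ adj a b -> circuit M [set a; b].
Proof.
move=> ab na nb nad; apply: circuit2 => //; apply: contra nad => h.
exact: indep2.
Qed.

Lemma circ3 x y z : adj x y -> adj x z -> adj y z -> circuit M [set x; y; z].
Proof.
move=> xy xz yz.
have nxy := adj_neq xy; have nxz := adj_neq xz; have nyz := adj_neq yz.
apply: circuitI.
  apply/negP => /indepP[B hB sB].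
  have xB : x \in B by apply: (subsetP sB); rewrite !inE eqxx.
  have yB : y \in B by apply: (subsetP sB); rewrite !inE eqxx ?orbT.
  have zB : z \in B by apply: (subsetP sB); rewrite !inE eqxx ?orbT.
  have [w _ eB] := basis2 hB xB.
  move: yB zB; rewrite eB !inE => /orP[/eqP yx|/eqP yw] /orP[/eqP zx|/eqP zw].
  - by rewrite yx eqxx in nxy.
  - by rewrite yx eqxx in nxy.
  - by rewrite zx eqxx in nxz.
  - by rewrite yw zw eqxx in nyz.
move=> w; rewrite !inE => /orP[/orP[]|]/eqP->.
- apply: indep_sub (indep_basis yz); apply/subsetP => v; rewrite !inE.
  by case: (eqVneq v x); case: (eqVneq v y); case: (eqVneq v z).
- apply: indep_sub (indep_basis xz); apply/subsetP => v; rewrite !inE.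
  by case: (eqVneq v x); case: (eqVneq v y); case: (eqVneq v z).
- apply: indep_sub (indep_basis xy); apply/subsetP => v; rewrite !inE.
  by case: (eqVneq v x); case: (eqVneq v y); case: (eqVneq v z).
Qed.

Lemma disj2 (a b c d : E) : a != c -> a != d -> b != c -> b != d -> [disjoint [set a; b] & [set c; d]].
Proof.
move=> ac ad bc bd; rewrite -setI_eq0; apply/eqP/setP => z; rewrite !inE.
case: (eqVneq z a) => [za|za]; first by subst z; rewrite (negbTE ac) (negbTE ad).
case: (eqVneq z b) => [zb|zb] //=; by subst z; rewrite (negbTE bc) (negbTE bd).
Qed.

End R2.

Section Tri.
Variable E : finType.
Variable M : matroid E.
Hypothesis H2 : forall B, B \in bases M -> #|B| = 2.

Local Notation adj := (adj M).
Local Notation sim := (sim M).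
Local Notation nonloop := (nonloop M).

Lemma card3 (e f g : E) : e != f -> e != g -> f != g -> #|[set e; f; g]| = 3.
Proof.
move=> ef eg fg; have ge : g != e by rewrite eq_sym.
have gf : g != f by rewrite eq_sym.
by rewrite setUC cardsU1 cards2 !inE ef (negbTE ge) (negbTE gf).
Qed.

Lemma amo x a b : nonloop x -> adj a b -> ~~ (sim x a && sim x b).
Proof.
move=> nx hab; apply/negP => /andP[xa xb].
have := sim_trans H2 nx (etrans (simC M a x) xa) xb.
by rewrite /Bm.sim (negbTE (adj_neq H2 hab)) hab.
Qed.

Variables e f g : E.
Hypotheses (hef : adj e f) (heg : adj e g) (hfg : adj f g).

Lemma tri_common x y : nonloop x -> nonloop y ->
  [|| (~~ sim x e && ~~ sim y e), (~~ sim x f && ~~ sim y f) | (~~ sim x g && ~~ sim y g)].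
Proof.
move=> nx ny.
move: (amo nx hef) (amo nx heg) (amo nx hfg) (amo ny hef) (amo ny heg) (amo ny hfg).
by case: (sim x e); case: (sim x f); case: (sim x g); case: (sim y e); case: (sim y f); case: (sim y g).
Qed.

Lemma tri_cls x : nonloop x -> cls M x = Nset M.
Proof.
move=> nx; apply/setP => y; rewrite !inE.
case: (eqVneq x y) => [<-|xy]; first by rewrite nx /conn eqxx.
case ny: (nonloop y); last by rewrite conn_loop // ny.
case ad: (adj x y); last by apply: (@conn_circ _ M [set x; y]); rewrite ?inE ?eqxx ?orbT //; apply: (circ2 H2 xy nx ny); rewrite ad.
have key : forall z, ~~ sim x z -> ~~ sim y z -> conn M x y.
  move=> z /(not_sim) /andP[_ xz] /(not_sim) /andP[_ yz].
  by apply: (@conn_circ _ M [set x; y; z]); [exact: (circ3 H2 ad xz yz) | rewrite !inE eqxx | rewrite !inE eqxx ?orbT].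
have := tri_common nx ny.
by case/or3P => /andP[h1 h2]; apply: key h1 h2.
Qed.

Lemma basis_nl B x : B \in bases M -> x \in B -> nonloop x.
Proof. by move=> hB xB; apply/nonloopP; exists B. Qed.

Lemma tri_main : 1 < #|bases M| -> borsuk_property M.
Proof.
move=> h1.
have hQ : forall x, nonloop x -> cls M x \in [set Nset M].
  by move=> x nx; rewrite (tri_cls nx) set11.
have d0 := diam_pos h1.
case: (boolP [exists B1 in bases M, exists B2 in bases M, [disjoint B1 & B2]]).
  case/exists_inP => D1 hD1 /exists_inP[D2 hD2 dD].
  have d4 : 4 <= diam (bases M).
    by have := dist_le_diam hD1 hD2; rewrite dist_disj // (H2 hD1) (H2 hD2).
  have hne : forall B, B \in bases M -> B :&: Nset M != set0.
    move=> B hB; have : 0 < #|B| by rewrite (H2 hB).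
    case/card_gt0P => x xB; apply/set0Pn; exists x; rewrite !inE xB /=.
    exact: basis_nl hB xB.
  have hd : forall B1 B2 q, B1 \in bases M -> B2 \in bases M -> q \in Nset M -> q \in B1 -> q \in B2 ->
     dist B1 B2 < diam (bases M).
    move=> B1 B2 q b1 b2 _ q1 q2.
    by apply: leq_ltn_trans (dist_share (H2 b1) (H2 b2) q1 q2) _; apply: leq_trans d4.
  have [P [bP cP cPb]] := star_part hne hd d0.
  apply: (@finish _ M [set Nset M] P) => //.
  by rewrite cards1; lia.
move/exists_inPn => nd.
have nd' : forall B1 B2, B1 \in bases M -> B2 \in bases M -> ~~ [disjoint B1 & B2].
  by move=> B1 B2 b1 b2; have /exists_inPn := nd B1 b1; apply.
have ef := adj_neq H2 hef; have eg := adj_neq H2 heg; have fg := adj_neq H2 hfg.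
have fe : f != e by rewrite eq_sym.
have ge : g != e by rewrite eq_sym.
have gf : g != f by rewrite eq_sym.
pose T0 := [set e; f; g].
have inT0 : forall x, nonloop x -> x \in T0.
  move=> x nx; apply: contraT; rewrite !inE => /norP[/norP[xe xf] xg].
  move: (amo nx hef) (amo nx heg) (amo nx hfg) => a1 a2 a3.
  have : [|| ~~ sim x e && ~~ sim x f, ~~ sim x e && ~~ sim x g | ~~ sim x f && ~~ sim x g].
    by move: a1 a2 a3; case: (sim x e); case: (sim x f); case: (sim x g).
  case/or3P => /andP[/not_sim/andP[_ h] /not_sim/andP[_ k]].
  - by have := nd' _ _ h hfg; rewrite disj2.
  - by have := nd' _ _ h hfg; rewrite disj2.
  - by have := nd' _ _ h heg; rewrite disj2.
have BT0 : forall B, B \in bases M -> B \subset T0.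
  by move=> B hB; apply/subsetP => y yB; apply: inT0; apply: basis_nl hB yB.
have c3 : #|T0| = 3 by apply: card3.
have pk : forall B, B \in bases M -> exists2 z, z \in T0 :\: B & [pick z in T0 :\: B] = Some z.
  move=> B hB; case: pickP => [z zD|n]; first by exists z.
  have : #|T0 :\: B| = 1 by rewrite cardsD (setIidPr (BT0 B hB)) c3 (H2 hB).
  by move/eqP/cards1P => [z ez]; have := n z; rewrite ez set11.
have uq : forall B z, B \in bases M -> z \in T0 :\: B -> B = T0 :\ z.
  move=> B z hB; rewrite inE => /andP[zB zT]; apply/eqP; rewrite eqEcard.
  have -> : B \subset T0 :\ z.
    apply/subsetP => y yB; rewrite in_setD1 (subsetP (BT0 B hB) y yB) andbT.
    by apply: contraNneq zB => <-.
  by rewrite (H2 hB); have := cardsD1 z T0; rewrite zT c3 /=; lia.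
have hS : forall B, B \in bases M -> [pick z in T0 :\: B] \in Some @: T0.
  by move=> B hB; have [z zD ->] := pk B hB; apply: imset_f; move: zD; rewrite inE => /andP[].
have hD : forall B1 B2, B1 \in bases M -> B2 \in bases M ->
    [pick z in T0 :\: B1] = [pick z in T0 :\: B2] -> dist B1 B2 < diam (bases M).
  move=> B1 B2 b1 b2; have [z1 zD1 ->] := pk B1 b1; have [z2 zD2 ->] := pk B2 b2 => -[ez].
  by rewrite (uq _ _ b1 zD1) (uq _ _ b2 zD2) ez dist_self.
have [P [bP cP cPb]] := part_ex hS hD d0.
apply: (@finish _ M [set Nset M] P) => //.
have : #|T0| <= #|Nset M|.
  apply: subset_leq_card; apply/subsetP => y; rewrite !inE => /orP[/orP[]|] /eqP ->.
  - exact: adj_nl hef.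
  - exact: adj_nl hfg.
  - exact: adj_nr hfg.
have := leq_imset_card Some T0; rewrite cards1; lia.
Qed.

End Tri.

Section Bip.
Variable E : finType.
Variable M : matroid E.
Hypothesis H2 : forall B, B \in bases M -> #|B| = 2.

Local Notation adj := (adj M).
Local Notation sim := (sim M).
Local Notation nonloop := (nonloop M).

Definition Pe a := [set x | nonloop x && sim x a].

Lemma PeP a x : (x \in Pe a) = nonloop x && sim x a.
Proof. by rewrite inE. Qed.

Lemma circ_proper (C D : {set E}) : circuit M C -> D \proper C -> indep M D.
Proof. by case/andP => _ /forallP h /(implyP (h D)). Qed.

Lemma circ_pair (C : {set E}) a b c : circuit M C -> a \in C -> b \in C -> c \in C ->
  c != a -> c != b -> indep M [set a; b].
Proof.
move=> cC aC bC cC' ca cb; apply: circ_proper cC _; apply/properP; split.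
  by apply/subsetP => z; rewrite !inE => /orP[]/eqP->.
by exists c; rewrite // !inE negb_or ca cb.
Qed.

Lemma simPP a x y : nonloop a -> x \in Pe a -> y \in Pe a -> sim x y.
Proof.
move=> na; rewrite !PeP => /andP[_ xa] /andP[_ ya].
by apply: (sim_trans H2 na xa); rewrite simC.
Qed.

Lemma adjPP a x y : nonloop a -> x \in Pe a -> y \in Pe a -> adj x y -> False.
Proof.
move=> na xa ya h; have := simPP na xa ya.
by rewrite /Bm.sim (negbTE (adj_neq H2 h)) h.
Qed.

Lemma other B q : B \in bases M -> q \in B -> exists2 p, adj q p & B = [set q; p].
Proof. by move=> hB qB; have [p _ eB] := basis2 H2 hB qB; exists p => //; rewrite /Bm.adj -eB. Qed.

Variables e f : E.
Hypothesis hef : adj e f.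
Hypothesis notri : forall g, ~~ (adj e g && adj f g).

Lemma ne : nonloop e. Proof. exact: adj_nl hef. Qed.
Lemma nf : nonloop f. Proof. exact: adj_nr hef. Qed.

Lemma cov x : nonloop x -> (x \in Pe e) || (x \in Pe f).
Proof.
move=> nx; rewrite !PeP nx /=; apply: contraT; rewrite negb_or => /andP[/not_sim/andP[_ h1] /not_sim/andP[_ h2]].
by have := notri x; rewrite adjC h1 adjC h2.
Qed.

Lemma disjPe x : x \in Pe e -> x \in Pe f -> False.
Proof.
rewrite !PeP => /andP[nx xe] /andP[_ xf].
have := sim_trans H2 nx (etrans (simC M e x) xe) xf; by rewrite /Bm.sim (negbTE (adj_neq H2 hef)) hef.
Qed.

Lemma adjPQ x y : x \in Pe e -> y \in Pe f -> adj x y.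
Proof.
move=> xe yf; apply: contraT => nad.
have nx : nonloop x by move: xe; rewrite PeP => /andP[].
have ny : nonloop y by move: yf; rewrite PeP => /andP[].
have sxy : sim x y by rewrite /Bm.sim nad orbT.
have ex : sim e x by rewrite simC; move: xe; rewrite PeP => /andP[].
have yf' : sim y f by move: yf; rewrite PeP => /andP[].
have := sim_trans H2 ny (sim_trans H2 nx ex sxy) yf'.
by rewrite /Bm.sim (negbTE (adj_neq H2 hef)) hef.
Qed.

Lemma cls_Pe x : x \in Pe e -> cls M x = Pe e.
Proof.
move=> xe; have nx : nonloop x by move: xe; rewrite PeP => /andP[].
apply/setP => y; rewrite /cls inE.
case: (eqVneq x y) => [<-|xy]; first by rewrite /conn eqxx xe.
case yP: (y \in Pe e).
  have ny : nonloop y by move: yP; rewrite PeP => /andP[].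
  apply: (@conn_circ _ M [set x; y]); rewrite ?inE ?eqxx ?orbT //.
  by apply: (circ2 H2 xy nx ny); apply: sim_neq_nadj xy; apply: simPP ne xe yP.
case ny: (nonloop y); last by rewrite conn_loop // ny.
have yf : y \in Pe f by move: (cov ny); rewrite yP.
rewrite /conn (negbTE xy) /=; apply/negbTE/existsP => -[C /andP[/andP[cC xC] yC]].
have : ~~ (C \subset [set x; y]).
  apply/negP => sC; move: cC => /andP[/negP nC _]; apply: nC.
  by apply: indep_sub sC (indep_basis (adjPQ xe yf)).
case/subsetPn => z zC; rewrite !inE negb_or => /andP[zx zy].
case nz: (nonloop z); last first.
  by have exz := loop_circ cC zC (negbT nz) xC; rewrite exz eqxx in zx.
case/orP: (cov nz) => zP.
  have yx : y != x by rewrite eq_sym.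
  have yz : y != z by rewrite eq_sym.
  have h := circ_pair cC xC zC yC yx yz.
  apply: (adjPP ne xe zP); apply: (indep2 H2 h); by rewrite eq_sym.
have xz : x != z by rewrite eq_sym.
have h := circ_pair cC yC zC xC xy xz.
apply: (adjPP nf yf zP); apply: (indep2 H2 h); by rewrite eq_sym.
Qed.

Lemma side B q : B \in bases M -> q \in B -> q \in Pe f -> exists2 p, p \in Pe e & B = [set q; p].
Proof.
move=> hB qB qf; have [p hp eB] := other hB qB; exists p => //.
have np := adj_nr hp; case/orP: (cov np) => // pf.
by case: (adjPP nf qf pf hp).
Qed.

Lemma bip_part : 1 < #|bases M| -> #|Pe e| <= #|Pe f| ->
  exists P, [/\ borsuk_partition M P, #|P| <= #|Pe f| & #|P| <= #|bases M|].
Proof.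
move=> h1 hle; have d0 := diam_pos h1.
have hne : forall B, B \in bases M -> B :&: Pe f != set0.
  move=> B hB; have : 0 < #|B| by rewrite (H2 hB).
  case/card_gt0P => x xB.
  have nx : nonloop x by apply/nonloopP; exists B.
  case/orP: (cov nx) => xP; last by apply/set0Pn; exists x; rewrite inE xB.
  have [p hp eB] := other hB xB; have np := adj_nr hp.
  case/orP: (cov np) => pP; first by case: (adjPP ne xP pP hp).
  by apply/set0Pn; exists p; rewrite inE pP eB !inE eqxx orbT.
have hd : forall B1 B2 q, B1 \in bases M -> B2 \in bases M -> q \in Pe f -> q \in B1 -> q \in B2 ->
     dist B1 B2 < diam (bases M).
  move=> B1 B2 q b1 b2 qf q1 q2.
  have [p1 p1e e1] := side b1 q1 qf; have [p2 p2e e2] := side b2 q2 qf.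
  case: (eqVneq p1 p2) => [ep|np]; first by rewrite e1 e2 ep dist_self.
  have g1 : 1 < #|Pe e| by apply/card_gt1P; exists p1, p2.
  have /card_gt1P[r1 [r2 [r1f r2f r12]]] : 1 < #|Pe f| by apply: leq_trans g1 hle.
  have a1 := adjPQ p1e r1f; have a2 := adjPQ p2e r2f.
  have p1r2 : p1 != r2 by apply/eqP => E1; subst; case: (disjPe p1e r2f).
  have r1p2 : r1 != p2 by apply/eqP => E1; subst; case: (disjPe p2e r1f).
  have d4 : 4 <= diam (bases M).
    have := dist_le_diam a1 a2; rewrite dist_disj ?(H2 a1) ?(H2 a2) //.
    exact: disj2.
  by apply: leq_ltn_trans (dist_share (H2 b1) (H2 b2) q1 q2) _; apply: leq_trans d4.
exact: star_part hne hd d0.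
Qed.

End Bip.


Lemma bip_main (E : finType) (M : matroid E) (H2 : forall B, B \in bases M -> #|B| = 2)
  (e f : E) (hef : adj M e f) (notri : forall g, ~~ (adj M e g && adj M f g)) :
  1 < #|bases M| -> borsuk_property M.
Proof.
move=> h1.
have hfe : adj M f e by rewrite adjC.
have notri' : forall g, ~~ (adj M f g && adj M e g) by move=> g; rewrite andbC.
have hQ : forall x, nonloop M x -> cls M x \in [set Pe M e; Pe M f].
  move=> x nx; case/orP: (cov notri nx) => xP.
    by rewrite (cls_Pe H2 hef notri xP) !inE eqxx.
  by rewrite (cls_Pe H2 hfe notri' xP) !inE eqxx orbT.
have eP : e \in Pe M e by rewrite PeP (adj_nl hef) simxx.
have fP : f \in Pe M f by rewrite PeP (adj_nr hef) simxx.
have c1 : 0 < #|Pe M e| by apply/card_gt0P; exists e.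
have c2 : 0 < #|Pe M f| by apply/card_gt0P; exists f.
have I0 : Pe M e :&: Pe M f = set0.
  by apply/setP => x; rewrite in_setI in_set0; apply/negbTE/negP => /andP[a b]; case: (disjPe H2 hef a b).
have cN : #|Pe M e| + #|Pe M f| <= #|Nset M|.
  have := cardsU (Pe M e) (Pe M f); rewrite I0 cards0 subn0 => <-.
  apply: subset_leq_card; apply/subsetP => x; rewrite !inE => /orP[] /andP[] //.
have cQ : #|[set Pe M e; Pe M f]| <= 2 by rewrite cards2; case: (_ != _).
case: (leqP #|Pe M e| #|Pe M f|) => hle.
  have [P [bP cP cPb]] := bip_part H2 hef notri h1 hle.
  apply: (@finish _ M _ P) bP cPb _ hQ => //.
  apply: leq_trans (leq_add cP cQ) _; apply: leq_trans (leq_add cN (leqnn 1)).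
  by apply: (fun a b (h : 0 < b) => (_ : a + 2 <= b + a + 1)) c1; lia.
have [P [bP cP cPb]] := bip_part H2 hfe notri' h1 (ltnW hle).
apply: (@finish _ M _ P) bP cPb _ hQ => //.
apply: leq_trans (leq_add cP cQ) _; apply: leq_trans (leq_add cN (leqnn 1)).
by apply: (fun a b (h : 0 < b) => (_ : a + 2 <= a + b + 1)) c2; lia.
Qed.

Theorem theorem2 (E : finType) (M : matroid E) :
  1 < #|bases M| -> rank M <= 2 -> borsuk_property M.
Proof.
move=> h1 hr.
have /set0Pn[B0 hB0] := bases_nonempty M.
have hd : forall B, B \in bases M -> #|B| = #|B0| by move=> B hB; exact: (card_bases hB hB0).
have le2 : #|B0| <= 2.
  by apply: leq_trans hr; rewrite /rank; apply: (bigmax_sup B0).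
move: hd le2; case: #|B0| => [|[|[|//]]] hd _.
- have : bases M \subset [set set0].
    by apply/subsetP => B hB; rewrite inE; apply/eqP/cards0_eq; rewrite hd.
  by move/subset_leq_card; rewrite cards1 leqNgt h1.
- exact: r1_main hd h1.
- have /eqP/cards2P[e [f [ef eB]]] := hd B0 hB0.
  have hef : adj M e f by rewrite /adj -eB.
  case: (boolP [exists g, adj M e g && adj M f g]) => [/existsP[g /andP[heg hfg]]|/existsPn nt].
    exact: (tri_main hd hef heg hfg h1).
  exact: (bip_main hd hef nt h1).
Qed.
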